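(* Let $d,m,n$ be positive integers with $\min\{m,n\}\ge2$ and $d\le mn$, let $M_1,\dots,M_{q_0}$ be all the $2\times2$ minors of $m\times n$ matrices, and let $P_1,P_2:\mathbb{R}^d\to M^{m\times n}$ be linear isomorphisms onto their images with $P_1\sim P_2$. Let $K_j=P_j(\mathbb{R}^d)$, $j=1,2$. Then $K_1$ has no Rank-$1$ connections if and only if $K_2$ has no Rank-$1$ connections, and $\mathrm{Span}\{M_1(P_1(z)),\dots,M_{q_0}(P_1(z))\}=\mathrm{Span}\{M_1(P_2(z)),\dots,M_{q_0}(P_2(z))\}$ as subsets of the polynomial ring $\mathbb{R}[z_1,\dots,z_d]$.
   Context: A linear map $P:\mathbb{R}^d\to M^{m\times n}$ has the form $P(z)=(a_{ij}\cdot z)_{ij}$ with $a_{ij}\in\mathbb{R}^d$ and is viewed as an $m\times n$ matrix with entries in $\mathbb{R}[z_1,\dots,z_d]$. $P_1\sim P_2$ means $P_2(z)$ is obtained from $P_1(z)$, as such matrices, by finitely many elementary row and column operations. A set has Rank-$1$ connections if it contains $A\neq B$ with $\mathrm{Rank}(A-B)=1$. *)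

(* Defs.v *)
From HB Require Import structures.
From mathcomp Require Import all_boot all_order all_algebra.
From mathcomp Require Import mpoly.
Set Implicit Arguments. Unset Strict Implicit. Unset Printing Implicit Defensive.
Import Order.TTheory GRing.Theory Num.Theory.
Local Open Scope ring_scope.

Section Defs.
Variables (R : realFieldType) (d m n : nat).

(* A linear map P : R^d -> M^{m x n} is given by its vectors a_ij in R^d:
   P(z) = (a_ij . z)_ij. *)
Definition linmap := 'I_m -> 'I_n -> 'rV[R]_d.

Definition evalP (a : linmap) (z : 'rV[R]_d) : 'M[R]_(m, n) :=
  \matrix_(i, j) \sum_(k < d) a i j 0 k * z 0 k.

Definition linform (v : 'rV[R]_d) : {mpoly R[d]} :=
  \sum_(k < d) v 0 k *: 'X_k.

Definition polymx (a : linmap) : 'M[{mpoly R[d]}]_(m, n) :=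
  \matrix_(i, j) linform (a i j).

Definition image_set (a : linmap) : 'M[R]_(m, n) -> Prop :=
  fun A => exists z, A = evalP a z.

Definition has_rank1_connection (K : 'M[R]_(m, n) -> Prop) : Prop :=
  exists A B, [/\ K A, K B, A != B & \rank (A - B) = 1%N].

Inductive elem_op : 'M[{mpoly R[d]}]_(m, n) -> 'M[{mpoly R[d]}]_(m, n) -> Prop :=
| op_row_swap i1 i2 X : elem_op X (xrow i1 i2 X)
| op_row_scale i (c : R) X : c != 0 ->
    elem_op X (\matrix_(k, j) if k == i then c%:MP * X k j else X k j)
| op_row_add i1 i2 (c : R) X : i1 != i2 ->
    elem_op X (\matrix_(k, j) if k == i2 then X k j + c%:MP * X i1 j else X k j)
| op_col_swap j1 j2 X : elem_op X (xcol j1 j2 X)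
| op_col_scale j (c : R) X : c != 0 ->
    elem_op X (\matrix_(k, l) if l == j then c%:MP * X k l else X k l)
| op_col_add j1 j2 (c : R) X : j1 != j2 ->
    elem_op X (\matrix_(k, l) if l == j2 then X k l + c%:MP * X k j1 else X k l).

Inductive mx_equiv : 'M[{mpoly R[d]}]_(m, n) -> 'M[{mpoly R[d]}]_(m, n) -> Prop :=
| mx_equiv_refl X : mx_equiv X X
| mx_equiv_step X Y Z : elem_op X Y -> mx_equiv Y Z -> mx_equiv X Z.

Definition minor2 (X : 'M[{mpoly R[d]}]_(m, n)) i1 i2 j1 j2 : {mpoly R[d]} :=
  X i1 j1 * X i2 j2 - X i1 j2 * X i2 j1.

Definition minor_span (X : 'M[{mpoly R[d]}]_(m, n)) : {mpoly R[d]} -> Prop :=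
  fun p => exists c : 'I_m -> 'I_m -> 'I_n -> 'I_n -> R,
    p = \sum_(i1 < m) \sum_(i2 < m | (i1 < i2)%N) \sum_(j1 < n)
          \sum_(j2 < n | (j1 < j2)%N) c i1 i2 j1 j2 *: minor2 X i1 i2 j1 j2.

End Defs.

(* Main.v *)
Require Import Defs.
From HB Require Import structures.
From mathcomp Require Import all_boot all_order all_algebra.
From mathcomp Require Import mpoly.
From mathcomp Require Import ring.
Import GRing.Theory Num.Theory.
Local Open Scope ring_scope.

Section Aux.
Variables (R : realFieldType) (d m n : nat).
Local Notation T := {mpoly R[d]}.
Local Notation C := (map_mx (@mpolyC d R)).

Lemma deltaM_E (T' : pzSemiRingType) p (a b : 'I_m) (X : 'M[T']_(m, p)) k j :
  (delta_mx a b *m X) k j = if k == a then X b j else 0.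
Proof.
rewrite !mxE (bigD1 b) //= big1 => [|l /negbTE nl]; last by rewrite mxE nl andbF mul0r.
by rewrite mxE eqxx andbT addr0; case: (k == a); rewrite ?mul1r ?mul0r.
Qed.

Lemma Mdelta_E (T' : pzSemiRingType) p (a b : 'I_n) (X : 'M[T']_(p, n)) k j :
  (X *m delta_mx a b) k j = if j == b then X k a else 0.
Proof.
rewrite !mxE (bigD1 a) //= big1 => [|l /negbTE nl]; last by rewrite mxE nl mulr0.
by rewrite mxE eqxx /= addr0; case: (j == b); rewrite ?mulr1 ?mulr0.
Qed.

Definition rel (X Y : 'M[T]_(m, n)) :=
  exists (E : 'M[R]_m) (F : 'M[R]_n), Y = C E *m X *m C F.

Lemma rel_refl X : rel X X.
Proof. by exists 1%:M, 1%:M; rewrite !map_mx1 mul1mx mulmx1. Qed.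

Lemma rel_trans X Y Z : rel X Y -> rel Y Z -> rel X Z.
Proof.
move=> [E [F ->]] [E' [F' ->]]; exists (E' *m E), (F *m F').
by rewrite !map_mxM !mulmxA.
Qed.

Lemma relL (E : 'M[R]_m) X : rel X (C E *m X).
Proof. by exists E, 1%:M; rewrite map_mx1 mulmx1. Qed.
Lemma relR (F : 'M[R]_n) X : rel X (X *m C F).
Proof. by exists 1%:M, F; rewrite map_mx1 mul1mx. Qed.

Lemma rowop_E (a b : 'I_m) (s : R) (X : 'M[T]_(m, n)) :
  C (1%:M + s *: delta_mx a b) *m X =
  \matrix_(k, j) if k == a then X k j + s%:MP * X b j else X k j.
Proof.
rewrite map_mxD map_mx1 map_mxZ map_delta_mx mulmxDl mul1mx -scalemxAl.
apply/matrixP => k j; rewrite [LHS]mxE [X in _ + X]mxE deltaM_E mxE.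
by case: (k == a); rewrite ?mulr0 ?addr0.
Qed.

Lemma colop_E (a b : 'I_n) (s : R) (X : 'M[T]_(m, n)) :
  X *m C (1%:M + s *: delta_mx a b) =
  \matrix_(k, j) if j == b then X k j + s%:MP * X k a else X k j.
Proof.
rewrite map_mxD map_mx1 map_mxZ map_delta_mx mulmxDr mulmx1 -scalemxAr.
apply/matrixP => k j; rewrite [LHS]mxE [X in _ + X]mxE Mdelta_E mxE.
by case: (j == b); rewrite ?mulr0 ?addr0.
Qed.

Lemma op_rel (X Y : 'M[T]_(m, n)) : elem_op X Y -> rel X Y.
Proof.
case=> {X Y}.
- move=> i1 i2 X; rewrite xrowE /tperm_mx -(map_perm_mx (@mpolyC d R)); exact: relL.
- move=> i c X _; rewrite -[X in rel X _]mul1mx; have := relL (1%:M + (c - 1) *: delta_mx i i) X.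
  rewrite mul1mx rowop_E; congr rel; apply/matrixP => k j; rewrite !mxE.
  case: eqP => // ->; rewrite mpolyCB mpolyC1; ring.
- move=> i1 i2 c X _; have := relL (1%:M + c *: delta_mx i2 i1) X.
  by rewrite rowop_E.
- move=> j1 j2 X; rewrite xcolE /tperm_mx -(map_perm_mx (@mpolyC d R)); exact: relR.
- move=> j c X _; have := relR (1%:M + (c - 1) *: delta_mx j j) X.
  rewrite colop_E; congr rel; apply/matrixP => k l; rewrite !mxE.
  case: eqP => // ->; rewrite mpolyCB mpolyC1; ring.
- move=> j1 j2 c X _; have := relR (1%:M + c *: delta_mx j1 j2) X.
  by rewrite colop_E.
Qed.


Lemma op_rev (X Y : 'M[T]_(m, n)) : elem_op X Y -> elem_op Y X.
Proof.
case=> {X Y}.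
- move=> i1 i2 X.
  have {2}-> : X = xrow i1 i2 (xrow i1 i2 X).
    by apply/matrixP => i j; rewrite !mxE perm.tpermK.
  exact: op_row_swap.
- move=> i c X c0.
  set Y := \matrix_(k, j) _.
  have -> : X = \matrix_(k, j) if k == i then c^-1%:MP * Y k j else Y k j.
    apply/matrixP => k j; rewrite !mxE; case: eqP => // _.
    by rewrite mulrA -mpolyCM mulVf // mpolyC1 mul1r.
  by apply: op_row_scale; rewrite invr_eq0.
- move=> i1 i2 c X ne.
  set Y := \matrix_(k, j) _.
  have -> : X = \matrix_(k, j) if k == i2 then Y k j + (- c)%:MP * Y i1 j else Y k j.
    apply/matrixP => k j; rewrite !mxE (negbTE ne); case: eqP => // _.
    rewrite mpolyCN; ring.
  exact: op_row_add.
- move=> j1 j2 X.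
  have {2}-> : X = xcol j1 j2 (xcol j1 j2 X).
    by apply/matrixP => i j; rewrite !mxE perm.tpermK.
  exact: op_col_swap.
- move=> j c X c0.
  set Y := \matrix_(k, l) _.
  have -> : X = \matrix_(k, l) if l == j then c^-1%:MP * Y k l else Y k l.
    apply/matrixP => k l; rewrite !mxE; case: eqP => // _.
    by rewrite mulrA -mpolyCM mulVf // mpolyC1 mul1r.
  by apply: op_col_scale; rewrite invr_eq0.
- move=> j1 j2 c X ne.
  set Y := \matrix_(k, l) _.
  have -> : X = \matrix_(k, l) if l == j2 then Y k l + (- c)%:MP * Y k j1 else Y k l.
    apply/matrixP => k l; rewrite !mxE (negbTE ne); case: eqP => // _.
    rewrite mpolyCN; ring.
  exact: op_col_add.
Qed.

Lemma equiv_rel (X Y : 'M[T]_(m, n)) : mx_equiv X Y -> rel X Y /\ rel Y X.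
Proof.
elim=> [Z|X1 Y1 Z1 op _ [h1 h2]]; first by split; apply: rel_refl.
split; first exact: rel_trans _ _ _ (op_rel _ _ op) h1.
exact: rel_trans _ _ _ h2 (op_rel _ _ (op_rev _ _ op)).
Qed.

Lemma evalP_map (a : linmap R d m n) z :
  evalP a z = map_mx (meval (fun k => z 0 k)) (polymx a).
Proof.
apply/matrixP => i j; rewrite !mxE /linform rmorph_sum /=.
by apply: eq_bigr => k _; rewrite mevalZ mevalXU.
Qed.

Lemma eval_rel (a1 a2 : linmap R d m n) :
  rel (polymx a1) (polymx a2) ->
  exists (E : 'M[R]_m) (F : 'M[R]_n), forall z, evalP a2 z = E *m evalP a1 z *m F.
Proof.
move=> [E [F h]]; exists E, F => z; rewrite !evalP_map h !map_mxM.
have hC (p q : nat) (M : 'M[R]_(p, q)) : map_mx (meval (fun k => z 0 k)) (C M) = M.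
  by apply/matrixP => i j; rewrite !mxE mevalC.
by rewrite !hC.
Qed.

Lemma rank1_transfer (a1 a2 : linmap R d m n) (E E' : 'M[R]_m) (F F' : 'M[R]_n) :
  (forall z, evalP a2 z = E *m evalP a1 z *m F) ->
  (forall z, evalP a1 z = E' *m evalP a2 z *m F') ->
  has_rank1_connection (image_set a1) -> has_rank1_connection (image_set a2).
Proof.
move=> h h' [A [B [[z ->] [w ->] neq rk]]].
exists (evalP a2 z), (evalP a2 w); split; [by exists z|by exists w| |].
  apply: contra neq => /eqP e; by rewrite !h' e.
have e1 : evalP a2 z - evalP a2 w = E *m (evalP a1 z - evalP a1 w) *m F.
  by rewrite !h mulmxBr mulmxBl.
have e2 : evalP a1 z - evalP a1 w = E' *m (evalP a2 z - evalP a2 w) *m F'.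
  by rewrite !h' mulmxBr mulmxBl.
apply/eqP; rewrite eqn_leq; apply/andP; split.
  rewrite e1 -rk; apply: leq_trans (mxrankM_maxl _ _) _; exact: mxrankM_maxr.
rewrite -rk e2; apply: leq_trans (mxrankM_maxl _ _) _; exact: mxrankM_maxr.
Qed.

Lemma sum_delta (V : nmodType) p (P : pred 'I_p) (k : 'I_p) (G : 'I_p -> V) :
  P k -> (forall i, i != k -> G i = 0) -> \sum_(i < p | P i) G i = G k.
Proof.
move=> Pk h; rewrite (bigD1 k) //= big1 ?addr0 // => i /andP[_ ni]; exact: h.
Qed.

Section Span.
Variable X : 'M[T]_(m, n).
Local Notation S := (minor_span X).

Lemma span0 : S 0.
Proof.
exists (fun _ _ _ _ => 0); symmetry.
apply: big1 => i1 _; apply: big1 => i2 _; apply: big1 => j1 _; apply: big1 => j2 _.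
by rewrite scale0r.
Qed.

Lemma spanD p q : S p -> S q -> S (p + q).
Proof.
move=> [c ->] [c' ->]; exists (fun a b e f => c a b e f + c' a b e f).
rewrite -big_split; apply: eq_bigr => i1 _; rewrite -big_split; apply: eq_bigr => i2 _.
rewrite -big_split; apply: eq_bigr => j1 _; rewrite -big_split; apply: eq_bigr => j2 _.
by rewrite scalerDl.
Qed.

Lemma spanZ (r : R) p : S p -> S (r *: p).
Proof.
move=> [c ->]; exists (fun a b e f => r * c a b e f).
rewrite scaler_sumr; apply: eq_bigr => i1 _; rewrite scaler_sumr; apply: eq_bigr => i2 _.
rewrite scaler_sumr; apply: eq_bigr => j1 _; rewrite scaler_sumr; apply: eq_bigr => j2 _.
by rewrite scalerA.
Qed.

Lemma spanC (r : R) p : S p -> S (r%:MP * p).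
Proof. by rewrite mul_mpolyC; apply: spanZ. Qed.

Lemma span_oo (k1 k2 : 'I_m) (l1 l2 : 'I_n) :
  (k1 < k2)%N -> (l1 < l2)%N -> S (minor2 X k1 k2 l1 l2).
Proof.
move=> hk hl.
exists (fun a b e f => ((a == k1) && (b == k2) && (e == l1) && (f == l2))%:R).
rewrite (@sum_delta _ _ xpredT k1) //=; last first.
  move=> i ni; apply: big1 => i2 _; apply: big1 => j1 _; apply: big1 => j2 _.
  by rewrite (negbTE ni) scale0r.
rewrite (@sum_delta _ _ _ k2) //=; last first.
  move=> i ni; apply: big1 => j1 _; apply: big1 => j2 _.
  by rewrite (negbTE ni) andbF scale0r.
rewrite (@sum_delta _ _ xpredT l1) //=; last first.
  move=> i ni; apply: big1 => j2 _.
  by rewrite (negbTE ni) andbF scale0r.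
rewrite (@sum_delta _ _ _ l2) //=; last first.
  by move=> i ni; rewrite (negbTE ni) andbF scale0r.
by rewrite !eqxx scale1r.
Qed.

Lemma span_o (k1 k2 : 'I_m) (l1 l2 : 'I_n) :
  (k1 < k2)%N -> S (minor2 X k1 k2 l1 l2).
Proof.
move=> hk; case: (ltngtP l1 l2) => hl; first exact: span_oo.
  have -> : minor2 X k1 k2 l1 l2 = (-1) *: minor2 X k1 k2 l2 l1.
    by rewrite scaleN1r /minor2; ring.
  by apply: spanZ; apply: span_oo.
have -> : minor2 X k1 k2 l1 l2 = 0.
  by rewrite /minor2 (ord_inj hl) subrr.
exact: span0.
Qed.

Lemma span_gen (k1 k2 : 'I_m) (l1 l2 : 'I_n) : S (minor2 X k1 k2 l1 l2).
Proof.
case: (ltngtP k1 k2) => hk; first exact: span_o.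
  have -> : minor2 X k1 k2 l1 l2 = (-1) *: minor2 X k2 k1 l1 l2.
    by rewrite scaleN1r /minor2; ring.
  by apply: spanZ; apply: span_o.
have -> : minor2 X k1 k2 l1 l2 = 0.
  by rewrite /minor2 (ord_inj hk); ring.
exact: span0.
Qed.

End Span.

Lemma minorL p q (E : 'M[T]_p) (X : 'M[T]_(p, q)) i1 i2 j1 j2 :
  minor2 (E *m X) i1 i2 j1 j2 =
  \sum_k1 \sum_k2 E i1 k1 * E i2 k2 * minor2 X k1 k2 j1 j2.
Proof.
rewrite /minor2 !mxE !big_distrlr -sumrB; apply: eq_bigr => k1 _.
rewrite -sumrB; apply: eq_bigr => k2 _ /=; ring.
Qed.

Lemma minorT p q (X : 'M[T]_(p, q)) i1 i2 j1 j2 :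
  minor2 X^T j1 j2 i1 i2 = minor2 X i1 i2 j1 j2.
Proof. rewrite /minor2 !mxE; ring. Qed.

Lemma minorR p q (X : 'M[T]_(p, q)) (F : 'M[T]_q) i1 i2 j1 j2 :
  minor2 (X *m F) i1 i2 j1 j2 =
  \sum_l1 \sum_l2 F l1 j1 * F l2 j2 * minor2 X i1 i2 l1 l2.
Proof.
rewrite -minorT trmx_mul minorL; apply: eq_bigr => l1 _; apply: eq_bigr => l2 _.
by rewrite minorT !mxE.
Qed.

Lemma span_rel (X Y : 'M[T]_(m, n)) : rel X Y ->
  forall p, minor_span Y p -> minor_span X p.
Proof.
move=> [E [F ->]] p [c ->].
apply: (big_ind (minor_span X)); [exact: span0|exact: spanD|move=> i1 _].
apply: (big_ind (minor_span X)); [exact: span0|exact: spanD|move=> i2 _].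
apply: (big_ind (minor_span X)); [exact: span0|exact: spanD|move=> j1 _].
apply: (big_ind (minor_span X)); [exact: span0|exact: spanD|move=> j2 _].
apply: spanZ; rewrite minorR.
apply: (big_ind (minor_span X)); [exact: span0|exact: spanD|move=> l1 _].
apply: (big_ind (minor_span X)); [exact: span0|exact: spanD|move=> l2 _].
rewrite minorL !mxE -mulrA; apply: spanC; apply: spanC.
apply: (big_ind (minor_span X)); [exact: span0|exact: spanD|move=> k1 _].
apply: (big_ind (minor_span X)); [exact: span0|exact: spanD|move=> k2 _].
rewrite !mxE -mulrA; apply: spanC; apply: spanC; exact: span_gen.
Qed.

End Aux.

Theorem lemma3 (R : realFieldType) (d m n : nat)
  (hd : (0 < d)%N) (hmn : (2 <= minn m n)%N) (hdmn : (d <= m * n)%N)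
  (a1 a2 : linmap R d m n)
  (inj1 : injective (evalP a1)) (inj2 : injective (evalP a2))
  (heq : mx_equiv (polymx a1) (polymx a2)) :
  (~ has_rank1_connection (image_set a1) <-> ~ has_rank1_connection (image_set a2))
  /\ (forall p, minor_span (polymx a1) p <-> minor_span (polymx a2) p).
Proof.
have [h12 h21] := @equiv_rel R d m n _ _ heq.
have [E [F hE]] := @eval_rel R d m n _ _ h12.
have [E' [F' hE']] := @eval_rel R d m n _ _ h21.
split.
  split=> H1 H2; apply: H1.
    exact: (@rank1_transfer R d m n _ _ _ _ _ _ hE' hE H2).
  exact: (@rank1_transfer R d m n _ _ _ _ _ _ hE hE' H2).
move=> p; split; [exact: (@span_rel R d m n _ _ h21)|exact: (@span_rel R d m n _ _ h12)].
Qed.
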